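(* Let $q$ be a prime power and let $t$ be a positive integer with $t\mid q-1$. Let $\mathbb{F}=\mathrm{GF}(q^2)$ and let $H\subseteq\mathbb{F}^\ast$ be the subgroup of the multiplicative group of order $t(q+1)$. Let $G(q^2,t(q+1))$ be the graph whose vertex set is $(\mathbb{F}\times\mathbb{F}\setminus\{(0,0)\})/\sim$, where $(a_1,b_1)\sim(a_2,b_2)$ iff there is $h\in H$ with $a_1=ha_2$ and $b_1=hb_2$, and in which two distinct vertices $\langle a,b\rangle$ and $\langle x,y\rangle$ are adjacent iff $ax+by\in H$. Then $G(q^2,t(q+1))$ is $K_{3,2t^2+1}$-free.
   Context: $\langle a,b\rangle$ denotes the equivalence class of $(a,b)$; adjacency is independent of representatives; the graph is simple (no loops). A graph is $K_{s,u}$-free if it contains no (not necessarily induced) subgraph isomorphic to the complete bipartite graph $K_{s,u}$. *)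

(* Defs.v *)
From mathcomp Require Import all_boot all_algebra all_fingroup.
Set Implicit Arguments. Unset Strict Implicit. Unset Printing Implicit Defensive.
Import GRing.Theory.
Local Open Scope ring_scope.

Definition prime_power (q : nat) : Prop :=
  exists p k : nat, prime p /\ (0 < k)%N /\ q = (p ^ k)%N.

Section G.
Variables (F : finFieldType) (H : {group {unit F}}).

Definition Hset : {set F} := [set val u | u in H].

Definition cls (p : F * F) : {set F * F} :=
  [set (val h * p.1, val h * p.2) | h in H].

Definition Gverts : {set {set F * F}} :=
  [set cls p | p in [set p : F * F | p != (0, 0)]].

(* adjacency: distinct classes, a x + b y in H (independent of representatives) *)
Definition Gadj (u v : {set F * F}) : bool :=
  (u != v) &&
  [exists p in u, exists r in v, p.1 * r.1 + p.2 * r.2 \in Hset].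
End G.

Definition Kfree (T : finType) (V : {set T}) (e : rel T) (s m : nat) : Prop :=
  ~ exists A B : {set T},
      [/\ (A \subset V) && (B \subset V), #|A| = s, #|B| = m,
          [disjoint A & B] &
          forall a b, a \in A -> b \in B -> e a b].

(* Main.v *)
Require Import Defs.
From mathcomp Require Import all_boot all_algebra all_fingroup.
From mathcomp Require Import all_solvable all_field.
From mathcomp Require Import ring.
Set Implicit Arguments. Unset Strict Implicit. Unset Printing Implicit Defensive.
Import GRing.Theory.
Local Open Scope ring_scope.

Lemma frob (F : finFieldType) (q : nat) p k : prime p -> q = (p ^ k)%N -> (0 < k)%N -> #|F| = (q ^ 2)%N ->
  forall x y : F, (x + y) ^+ q = x ^+ q + y ^+ q.
Proof.
move=> pp qE k0 cF x y.
have ch : p \in [pchar F].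
  apply: (card_finPcharP (n := (k * 2)%N)) => //; by rewrite cF qE expnM.
apply: exprDn_pchar; rewrite qE (eq_pnat _ (pcharf_eq ch)).
by rewrite pnatX pnat_id.
Qed.
Lemma fiber (F : finFieldType) (n : nat) (frob : forall x y : F, (x + y) ^+ n = x ^+ n + y ^+ n)
  (a b r r' : F) : a != 0 -> b != 0 ->
  leq #|[set s : F | [&& s != 0, s ^+ n.+1 == r & (a + b * s) ^+ n.+1 == r']]| 2.
Proof.
move=> a0 b0.
pose P : {poly F} := Poly [:: a * b ^+ n * r; a ^+ n.+1 + b ^+ n.+1 * r - r'; b * a ^+ n].
have szP : size P = 3%N.
  by rewrite /P (PolyK (c := 0)) //= mulf_neq0 // expf_neq0.
have P0 : P != 0 by rewrite -size_poly_eq0 szP.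
rewrite cardE -ltnS -szP; apply: max_poly_roots => //; last exact: enum_uniq.
apply/allP => s; rewrite mem_enum inE => /and3P[s0 /eqP rE /eqP r'E].
rewrite /root /P horner_Poly /=.
rewrite -r'E -rE !exprS frob exprMn.
apply/eqP; ring.
Qed.

Lemma countS (F : finFieldType) (n : nat) (frob : forall x y : F, (x + y) ^+ n = x ^+ n + y ^+ n)
  (t : nat) (t0 : (0 < t)%N) (S : {set F})
  (HS : forall s, s \in S -> (s != 0) && ((s ^+ n.+1) ^+ t == 1)) (a b : F) :
  a != 0 -> b != 0 -> leq #|[set s in S | a + b * s \in S]| (2 * t ^ 2).
Proof.
move=> a0 b0.
pose T := [set r : F | r ^+ t == 1].
have cT : leq #|T| t.
  rewrite cardE; apply: max_unity_roots => //; last exact: enum_uniq.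
  by apply/allP => r; rewrite mem_enum inE unity_rootE.
pose f (s : F) := (s ^+ n.+1, (a + b * s) ^+ n.+1).
rewrite -sum1_card (partition_big f (fun j => j \in setX T T)); last first.
  move=> s; rewrite inE => /andP[/HS /andP[_ h1] /HS /andP[_ h2]].
  by rewrite inE /= !inE h1 h2.
apply: (@leq_trans (\sum_(j in setX T T) 2)%N).
  apply: leq_sum => -[r r'] _.
  rewrite sum1dep_card; apply: (leq_trans _ (@fiber _ _ frob a b r r' a0 b0)).
  apply: subset_leq_card; apply/subsetP => s; rewrite !inE.
  case/andP => /andP[/HS /andP[-> _] _] /eqP[-> ->].
  by rewrite !eqxx.
rewrite sum_nat_const cardsX mulnC leq_mul2l /= expnS expn1.
exact: leq_mul.
Qed.

Section Graph.
Variables (F : finFieldType) (H : {group {unit F}}).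

Lemma HsetP x : reflect (exists2 u, u \in H & x = val u) (x \in Hset H).
Proof. exact: imsetP. Qed.

Lemma Hset_mul x y : x \in Hset H -> y \in Hset H -> x * y \in Hset H.
Proof.
move=> /HsetP[u uH ->] /HsetP[w wH ->]; apply/HsetP; exists (u * w)%g.
  exact: groupM.
by rewrite FinRing.val_unitM.
Qed.

Lemma Hset_inv x : x \in Hset H -> x^-1 \in Hset H.
Proof.
move=> /HsetP[u uH ->]; apply/HsetP; exists (u^-1)%g; first by rewrite groupV.
by [].
Qed.

Lemma Hset_neq0 x : x \in Hset H -> x != 0.
Proof. by move=> /HsetP[u _ ->]; rewrite -unitfE; exact: (valP u). Qed.

Lemma Hset1 : 1 \in Hset H.
Proof. by apply/HsetP; exists 1%g; rewrite ?group1. Qed.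

Lemma Hset_pow x : x \in Hset H -> x ^+ #|H| = 1.
Proof.
move=> /HsetP[u uH ->]; by rewrite -FinRing.val_unitX expg_cardG.
Qed.

Lemma Hset_div x y : x \in Hset H -> y \in Hset H -> x / y \in Hset H.
Proof. by move=> hx hy; apply: Hset_mul => //; apply: Hset_inv. Qed.

Lemma Hset_cancel x y : x \in Hset H -> x * y \in Hset H -> y \in Hset H.
Proof.
move=> hx hxy; have := Hset_mul (Hset_inv hx) hxy.
by rewrite mulrA mulVf ?mul1r // Hset_neq0.
Qed.

Definition sc (h : F) (p : F * F) := (h * p.1, h * p.2).

Lemma memcls r p : reflect (exists2 h, h \in Hset H & r = sc h p) (r \in cls H p).
Proof.
apply: (iffP imsetP) => [[u uH ->]|[h /HsetP[u uH ->] ->]].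
  by exists (val u) => //; apply/HsetP; exists u.
by exists u.
Qed.

Lemma cls_self p : p \in cls H p.
Proof. by apply/memcls; exists 1; rewrite ?Hset1 // /sc !mul1r; case: p. Qed.

Lemma cls_scale h p : h \in Hset H -> cls H (sc h p) = cls H p.
Proof.
move=> hH; apply/setP => r; apply/memcls/memcls => -[k kH ->].
  by exists (k * h); rewrite ?Hset_mul // /sc /= !mulrA.
exists (k / h); first by rewrite Hset_div.
by rewrite /sc /= !mulrA divfK ?Hset_neq0.
Qed.

Lemma cls_eq r p : r \in cls H p -> cls H r = cls H p.
Proof. by move=> /memcls[h hH ->]; rewrite cls_scale. Qed.

Definition dot (x y : F * F) := x.1 * y.1 + x.2 * y.2.
Definition det (x y : F * F) := x.1 * y.2 - x.2 * y.1.

Lemma dot_sc h k v x : dot (sc h v) (sc k x) = h * k * dot v x.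
Proof. rewrite /dot /sc /=; ring. Qed.

Lemma dot_scr h v x : dot v (sc h x) = h * dot v x.
Proof. rewrite /dot /sc /=; ring. Qed.

Lemma adj_dot v x : Gadj H (cls H v) (cls H x) -> dot v x \in Hset H.
Proof.
case/andP => _ /existsP[p /andP[/memcls[h hH ->]] /existsP[r /andP[/memcls[k kH ->]]]].
rewrite -/(dot _ _) dot_sc => hd.
by apply: (Hset_cancel _ hd); rewrite Hset_mul.
Qed.

Definition rep (b : {set F * F}) := odflt (0, 0) [pick p in b].

Lemma repP b : b \in Gverts H -> b = cls H (rep b) /\ rep b != (0, 0).
Proof.
case/imsetP => p0; rewrite inE => p00 ->.
rewrite /rep; case: pickP => [p /= pin|/(_ p0)]; last by rewrite cls_self.
split; first by rewrite (cls_eq pin).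
move: pin => /memcls[h hH ->]; apply: contra p00; rewrite /sc.
case: p0 => a c /=; rewrite xpair_eqE !mulf_eq0 (negbTE (Hset_neq0 hH)) /=.
by move=> /andP[/eqP -> /eqP ->].
Qed.

Lemma indep v w x : v != (0, 0) -> cls H v != cls H w ->
  dot v x \in Hset H -> dot w x \in Hset H -> det v w != 0.
Proof.
move=> v0 neq hv hw; apply/negP => /eqP d0.
have [be wE] : exists be, w = sc be v.
  case: v v0 d0 neq hv hw => v1 v2 v0 d0 _ _ _; case: w d0 => w1 w2 d0.
  have [v10|v10] := eqVneq v1 0.
    have v20 : v2 != 0 by move: v0; rewrite v10 xpair_eqE eqxx.
    exists (w2 / v2); rewrite /sc /= v10 mulr0 divfK //.
    move: d0; rewrite /det /= v10 mul0r sub0r => /eqP.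
    by rewrite oppr_eq0 mulf_eq0 (negbTE v20) /= => /eqP ->.
  exists (w1 / v1); rewrite /sc /= divfK //; congr (_, _).
  have e : v1 * w2 = v2 * w1 by apply/eqP; rewrite -subr_eq0 -d0.
  apply: (mulfI v10); rewrite e; field; exact: v10.
have dvx := Hset_neq0 hv.
have beH : be \in Hset H.
  have -> : be = dot w x / dot v x.
    by rewrite wE /dot /sc /= -mulrA -mulrA -mulrDr mulfK.
  exact: Hset_div.
by move: neq; rewrite wE cls_scale // eqxx.
Qed.

Lemma solve v1 v2 y z : det v1 v2 != 0 -> dot v1 y = dot v1 z -> dot v2 y = dot v2 z -> y = z.
Proof.
move=> d0 e1 e2.
have E1 u : det v1 v2 * u.1 = v2.2 * dot v1 u - v1.2 * dot v2 u by rewrite /det /dot; ring.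
have E2 u : det v1 v2 * u.2 = v1.1 * dot v2 u - v2.1 * dot v1 u by rewrite /det /dot; ring.
case: y z e1 e2 E1 E2 => y1 y2 [z1 z2] e1 e2 E1 E2.
congr (_, _); apply: (mulfI d0).
  by rewrite (E1 (y1, y2)) (E1 (z1, z2)) e1 e2.
by rewrite (E2 (y1, y2)) (E2 (z1, z2)) e1 e2.
Qed.

End Graph.

Theorem theorem5 (q t : nat) (F : finFieldType) (H : {group {unit F}}) :
  prime_power q -> (0 < t)%N -> (t %| q - 1)%N ->
  #|F| = (q ^ 2)%N -> #|H| = (t * (q + 1))%N ->
  Kfree (Gverts H) (@Gadj F H) 3 (2 * t ^ 2 + 1).
Proof.
move=> [p [k [pp [k0 qE]]]] t0 _ cF cH [A [B [/andP[sA sB] cA cB _ adj]]].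
have fr := frob pp qE k0 cF.
have szA : size (enum A) = 3%N by rewrite -cardE.
have uA := enum_uniq (mem A).
have mA x : x \in enum A -> x \in A by rewrite mem_enum.
case E: (enum A) szA uA mA => [|a1 [|a2 [|a3 [|]]]] // _ uA mA.
have a1A : a1 \in A by apply: mA; rewrite !inE eqxx.
have a2A : a2 \in A by apply: mA; rewrite !inE eqxx ?orbT.
have a3A : a3 \in A by apply: mA; rewrite !inE eqxx ?orbT.
move: uA; rewrite /= !inE negb_or andbT => /andP[/andP[n12 n13] n23].
have [e1 v10] := repP (subsetP sA _ a1A).
have [e2 v20] := repP (subsetP sA _ a2A).
have [e3 v30] := repP (subsetP sA _ a3A).
set v1 := rep a1 in e1 v10; set v2 := rep a2 in e2 v20; set v3 := rep a3 in e3 v30.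
have Dv b a v : a \in A -> a = cls H v -> b \in B -> dot v (rep b) \in Hset H.
  move=> aA ea bB; apply: adj_dot; rewrite -ea -(repP (subsetP sB _ bB)).1.
  exact: adj.
have [b0 b0B] : exists b0, b0 \in B by apply/card_gt0P; rewrite cB addn1.
have d12 : det v1 v2 != 0.
  by apply: (indep v10 _ (Dv _ _ _ a1A e1 b0B) (Dv _ _ _ a2A e2 b0B)); rewrite -e1 -e2.
have d32 : det v3 v2 != 0.
  apply: (indep v30 _ (Dv _ _ _ a3A e3 b0B) (Dv _ _ _ a2A e2 b0B)); rewrite -e3 -e2.
  by rewrite eq_sym.
have d13 : det v1 v3 != 0.
  by apply: (indep v10 _ (Dv _ _ _ a1A e1 b0B) (Dv _ _ _ a3A e3 b0B)); rewrite -e1 -e3.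
pose al := det v3 v2 / det v1 v2.
pose be := det v1 v3 / det v1 v2.
have al0 : al != 0 by rewrite mulf_neq0 // invr_eq0.
have be0 : be != 0 by rewrite mulf_neq0 // invr_eq0.
have ID x : dot v3 x = al * dot v1 x + be * dot v2 x.
  rewrite /al /be /dot /det; field; exact: d12.
pose g b := dot v2 (rep b) / dot v1 (rep b).
pose S := [set s in Hset H | al + be * s \in Hset H].
have HS s : s \in Hset H -> (s != 0) && ((s ^+ q.+1) ^+ t == 1).
  move=> sH; rewrite (Hset_neq0 sH) /= -exprM mulnC -addn1 -cH Hset_pow //.
have injg : {in B &, injective g}.
  move=> b b' bB b'B eg.
  have h1 := Hset_neq0 (Dv _ _ _ a1A e1 bB).
  have h1' := Hset_neq0 (Dv _ _ _ a1A e1 b'B).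
  pose la := dot v1 (rep b') / dot v1 (rep b).
  have laH : la \in Hset H by apply: Hset_div; apply: Dv a1A e1 _.
  have yx : sc la (rep b) = rep b'.
    apply: (solve d12); rewrite dot_scr.
      by rewrite /la divfK.
    have -> : dot v2 (rep b') = g b' * dot v1 (rep b') by rewrite /g divfK.
    rewrite -eg /g /la; field; exact: h1.
  by rewrite (repP (subsetP sB _ bB)).1 (repP (subsetP sB _ b'B)).1 -yx cls_scale.
have : (#|B| <= #|S|)%N.
  rewrite -(card_in_imset injg); apply: subset_leq_card; apply/subsetP => _ /imsetP[b bB ->].
  have h1 := Dv _ _ _ a1A e1 bB; have h2 := Dv _ _ _ a2A e2 bB; have h3 := Dv _ _ _ a3A e3 bB.
  rewrite inE Hset_div //=.
  have -> : al + be * g b = dot v3 (rep b) / dot v1 (rep b).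
    rewrite ID /g; field; exact: Hset_neq0 h1.
  exact: Hset_div.
move/leq_trans => /(_ _ (countS fr t0 HS al0 be0)).
by rewrite cB addn1 ltnn.
Qed.
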